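(* Let $X$ be a set. (i) For every log-scale $\ell$ on $X$ there exists a metric on $X$ associated with $\ell$. (ii) If $|x-y|$ is a metric on $X$, then the function $\ell(x,y)=-\lfloor \ln|x-y|\rfloor$ (with $\ell(x,x)=+\infty$) is a log-scale on $X$, and the metric $|\cdot|$ is associated with it.
   Context: A log-scale on a set $X$ is a function $\ell:X\times X\to\mathbb{R}\cup\{\infty\}$ such that (1) $\ell(x,y)=\ell(y,x)$ for all $x,y$; (2) $\ell(x,y)=+\infty$ if and only if $x=y$; (3) there is $\delta\ge 0$ with $\ell(x,z)\ge\min(\ell(x,y),\ell(y,z))-\delta$ for all $x,y,z\in X$. A metric $|\cdot|$ on $X$ is associated with the log-scale $\ell$ if there are constants $0<\alpha<1$ and $c>1$ such that $c^{-1}\alpha^{\ell(x,y)}\le|x-y|\le c\,\alpha^{\ell(x,y)}$ for all $x,y\in X$. *)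

(* Defs.v *)
From Stdlib Require Import Reals ClassicalEpsilon.
Open Scope R_scope.

(* Extended reals R ∪ {+∞}: [Some r] is the real r, [None] is +∞. *)
Definition xR := option R.

Definition xle (a b : xR) : Prop :=
  match b with
  | None => True
  | Some rb => match a with None => False | Some ra => ra <= rb end
  end.

Definition xmin (a b : xR) : xR :=
  match a, b with
  | None, _ => b
  | _, None => a
  | Some ra, Some rb => Some (Rmin ra rb)
  end.

Definition xsub (a : xR) (d : R) : xR :=
  match a with None => None | Some ra => Some (ra - d) end.

Definition xpow (alpha : R) (a : xR) : R :=
  match a with None => 0 | Some ra => Rpower alpha ra end.

Definition is_logscale {X : Type} (l : X -> X -> xR) : Prop :=
  (forall x y, l x y = l y x) /\
  (forall x y, l x y = None <-> x = y) /\
  (exists delta, 0 <= delta /\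
     forall x y z, xle (xsub (xmin (l x y) (l y z)) delta) (l x z)).

Definition is_metric {X : Type} (d : X -> X -> R) : Prop :=
  (forall x y, 0 <= d x y) /\
  (forall x y, d x y = 0 <-> x = y) /\
  (forall x y, d x y = d y x) /\
  (forall x y z, d x z <= d x y + d y z).

Definition associated {X : Type} (d : X -> X -> R) (l : X -> X -> xR) : Prop :=
  exists alpha c, 0 < alpha < 1 /\ 1 < c /\
    forall x y, / c * xpow alpha (l x y) <= d x y <= c * xpow alpha (l x y).

(* floor: Int_part r = up r - 1 is the integer part (floor) of r *)
Definition log_of_metric {X : Type} (d : X -> X -> R) (x y : X) : xR :=
  if excluded_middle_informative (x = y) then None
  else Some (- IZR (Int_part (ln (d x y)))).

(* Main.v *)
Require Import Defs.
From Stdlib Require Import Reals Lra Lia List ClassicalEpsilon.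
Open Scope R_scope.

Lemma my_exp_le x y : x <= y -> exp x <= exp y.
Proof. intros H; destruct (Rle_lt_or_eq_dec _ _ H) as [h|h].
  left; now apply exp_increasing. subst; lra. Qed.

Lemma my_ln_le x y : 0 < x -> x <= y -> ln x <= ln y.
Proof. intros H0 H; destruct (Rle_lt_or_eq_dec _ _ H) as [h|h].
  left; now apply ln_increasing. subst; lra. Qed.

Lemma xpow_exp t r : xpow (exp (- t)) (Some r) = exp (- (t * r)).
Proof. simpl. unfold Rpower. rewrite ln_exp. f_equal; ring. Qed.

Lemma xpow_nonneg t a : 0 <= xpow (exp (- t)) a.
Proof. destruct a; simpl. unfold Rpower. left; apply exp_pos. lra. Qed.

Lemma quasi_opt t d a b c : 0 < t ->
  xle (xsub (xmin a b) d) c ->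
  xpow (exp (-t)) c <= exp (t*d) * Rmax (xpow (exp (-t)) a) (xpow (exp (-t)) b).
Proof.
  intros Ht H.
  assert (Hm : 0 <= Rmax (xpow (exp (-t)) a) (xpow (exp (-t)) b)).
  { eapply Rle_trans; [apply xpow_nonneg | apply Rmax_l]. }
  assert (He := exp_pos (t*d)).
  destruct c as [rc|]; [|simpl; nra].
  assert (key : forall r, r - d <= rc ->
     exp (- (t*rc)) <= exp (t*d) * exp (- (t*r))).
  { intros r Hr. rewrite <- exp_plus. apply my_exp_le. nra. }
  rewrite xpow_exp.
  destruct a as [ra|], b as [rb|]; simpl in H.
  - destruct (Rle_dec ra rb) as [h|h].
    + rewrite Rmin_left in H by lra.
      eapply Rle_trans; [apply (key ra); lra|].
      apply Rmult_le_compat_l; [lra|]. rewrite <- xpow_exp. apply Rmax_l.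
    + rewrite Rmin_right in H by lra.
      eapply Rle_trans; [apply (key rb); lra|].
      apply Rmult_le_compat_l; [lra|]. rewrite <- (xpow_exp t rb). apply Rmax_r.
  - eapply Rle_trans; [apply (key ra); lra|].
    apply Rmult_le_compat_l; [lra|]. rewrite <- xpow_exp. apply Rmax_l.
  - eapply Rle_trans; [apply (key rb); lra|].
    apply Rmult_le_compat_l; [lra|]. rewrite <- (xpow_exp t rb). apply Rmax_r.
  - contradiction.
Qed.

Fixpoint ps {X} (rho : X -> X -> R) (x : X) (ys : list X) : R :=
  match ys with nil => 0 | y :: ys' => rho x y + ps rho y ys' end.
Fixpoint lst {X} (x : X) (ys : list X) : X :=
  match ys with nil => x | y :: ys' => lst y ys' end.
Fixpoint cs {X} (rho : X -> X -> R) (x : X) (l : list X) (y : X) : R :=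
  match l with nil => rho x y | z :: l' => rho x z + cs rho z l' y end.

Section Chains.
Context {X : Type} (rho : X -> X -> R) (Hnn : forall a b, 0 <= rho a b).

Lemma ps_nonneg x ys : 0 <= ps rho x ys.
Proof. revert x; induction ys; intros x; simpl; [lra|]. pose proof (Hnn x a); pose proof (IHys a); lra. Qed.

Lemma cs_nonneg x l y : 0 <= cs rho x l y.
Proof. revert x; induction l; intros x; simpl; [auto|]. pose proof (Hnn x a); pose proof (IHl a); lra. Qed.

Lemma ps_app x ys1 b ys2 :
  ps rho x (ys1 ++ b :: ys2) = ps rho x ys1 + rho (lst x ys1) b + ps rho b ys2.
Proof. revert x; induction ys1; intros x; simpl; [ring|]. rewrite IHys1; ring. Qed.

Lemma lst_app (x : X) ys1 b ys2 : lst x (ys1 ++ b :: ys2) = lst b ys2.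
Proof. revert x; induction ys1; intros x; simpl; auto. Qed.

Lemma cs_ps x l y : cs rho x l y = ps rho x (l ++ y :: nil).
Proof. revert x; induction l; intros x; simpl; [ring|]. rewrite IHl; ring. Qed.

Lemma lst_last (x : X) l y : lst x (l ++ y :: nil) = y.
Proof. apply lst_app. Qed.

Lemma cs_app x l1 z l2 y : cs rho x (l1 ++ z :: l2) y = cs rho x l1 z + cs rho z l2 y.
Proof. revert x; induction l1; intros x; simpl; [ring|]. rewrite IHl1; ring. Qed.

Lemma split_lemma T : forall ys x c, ys <> nil -> 0 <= c -> c <= T ->
  c + ps rho x ys <= 2 * T ->
  exists ys1 b ys2, ys = ys1 ++ b :: ys2 /\ c + ps rho x ys1 <= T /\ ps rho b ys2 <= T.
Proof.
  induction ys as [|b ys' IH]; intros x c Hne Hc HcT Htot; [congruence|].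
  simpl in Htot.
  destruct (Rle_dec (c + rho x b) T) as [h|h].
  - destruct ys' as [|b' ys''].
    + exists nil, b, nil. simpl. repeat split; lra.
    + destruct (IH b (c + rho x b)) as (ys1 & b0 & ys2 & E & H1 & H2).
      * discriminate.
      * pose proof (Hnn x b); lra.
      * lra.
      * lra.
      * exists (b :: ys1), b0, ys2. rewrite E. simpl. repeat split; lra.
  - exists nil, b, ys'. simpl. repeat split; lra.
Qed.

Variable K : R.
Hypothesis HK1 : 1 <= K.
Hypothesis HK2 : K * K <= 2.
Hypothesis Hxx : forall a, rho a a = 0.
Hypothesis Hq : forall a b c, rho a c <= K * Rmax (rho a b) (rho b c).

Lemma frink n : forall ys x, (length ys <= n)%nat -> rho x (lst x ys) <= 2 * ps rho x ys.
Proof.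
  induction n; intros ys x Hl.
  - destruct ys; [simpl; rewrite Hxx; lra | simpl in Hl; lia].
  - destruct ys as [|y0 ys0]; [simpl; rewrite Hxx; lra|].
    set (ys := y0 :: ys0) in *.
    set (S := ps rho x ys).
    destruct (split_lemma (S/2) ys x 0) as (ys1 & b & ys2 & E & H1 & H2).
    + discriminate.
    + lra.
    + pose proof (ps_nonneg x ys); unfold S; lra.
    + unfold S; lra.
    + assert (HS : S = ps rho x ys1 + rho (lst x ys1) b + ps rho b ys2)
        by (unfold S; rewrite E; apply ps_app).
      assert (Hl1 : (length ys1 <= n)%nat).
      { rewrite E in Hl. rewrite length_app in Hl. simpl in Hl. lia. }
      assert (Hl2 : (length ys2 <= n)%nat).
      { rewrite E in Hl. rewrite length_app in Hl. simpl in Hl. lia. }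
      pose proof (IHn ys1 x Hl1) as I1.
      pose proof (IHn ys2 b Hl2) as I2.
      pose proof (ps_nonneg x ys1). pose proof (ps_nonneg b ys2).
      set (a := lst x ys1) in *.
      assert (Hlst : lst x ys = lst b ys2) by (rewrite E; apply lst_app).
      rewrite Hlst. set (e := lst b ys2) in *.
      assert (A1 : rho x a <= S) by lra.
      assert (A2 : rho a b <= S) by lra.
      assert (A3 : rho b e <= S) by lra.
      pose proof (Hq a b e) as Q2.
      assert (Q2' : rho a e <= K * S).
      { eapply Rle_trans; [apply Q2|]. apply Rmult_le_compat_l; [lra|].
        apply Rmax_lub; lra. }
      pose proof (Hq x a e) as Q1.
      assert (HS0 : 0 <= S) by (apply ps_nonneg).
      assert (Rmax (rho x a) (rho a e) <= K * S).
      { apply Rmax_lub; nra. }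
      assert (rho x e <= K * (K * S)).
      { eapply Rle_trans; [apply Q1|]. apply Rmult_le_compat_l; lra. }
      fold ys. fold S. nra.
Qed.

Lemma frink_cs x l y : rho x y <= 2 * cs rho x l y.
Proof.
  rewrite cs_ps. pose proof (frink (length (l ++ y :: nil)) (l ++ y :: nil) x (le_n _)) as F.
  rewrite lst_last in F. exact F.
Qed.

End Chains.

Definition EE {X} (rho : X -> X -> R) x y (s : R) : Prop := exists l, s = - cs rho x l y.

Lemma EE_bound {X} (rho : X -> X -> R) (H : forall a b, 0 <= rho a b) x y : bound (EE rho x y).
Proof. exists 0. intros s [l ->]. pose proof (cs_nonneg rho H x l y). lra. Qed.

Lemma EE_ne {X} (rho : X -> X -> R) x y : exists s, EE rho x y s.
Proof. exists (- cs rho x nil y). now exists nil. Qed.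

Definition cdist {X} (rho : X -> X -> R) (H : forall a b, 0 <= rho a b) (x y : X) : R :=
  - proj1_sig (completeness _ (EE_bound rho H x y) (EE_ne rho x y)).

Lemma cdist_le {X} rho H (x y : X) l : cdist rho H x y <= cs rho x l y.
Proof.
  unfold cdist. pose proof (proj2_sig (completeness _ (EE_bound rho H x y) (EE_ne rho x y))) as [Hub _].
  set (m := proj1_sig _) in *.
  assert (- cs rho x l y <= m) by (apply Hub; now exists l). lra.
Qed.

Lemma cdist_ge {X} rho H (x y : X) b : (forall l, b <= cs rho x l y) -> b <= cdist rho H x y.
Proof.
  intros Hb. unfold cdist. pose proof (proj2_sig (completeness _ (EE_bound rho H x y) (EE_ne rho x y))) as [_ Hl].
  set (m := proj1_sig _) in *.
  assert (m <= - b). { apply Hl. intros s [l ->]. specialize (Hb l). lra. }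
  lra.
Qed.

Lemma cs_rev {X} (rho : X -> X -> R) (Hs : forall a b, rho a b = rho b a) l :
  forall x y, cs rho y (rev l) x = cs rho x l y.
Proof.
  induction l as [|z l IH]; intros x y; simpl; auto.
  rewrite cs_app. rewrite IH. simpl. rewrite (Hs z x). ring.
Qed.

Lemma part1 (X : Type) (l : X -> X -> xR) : is_logscale l ->
  exists d : X -> X -> R, is_metric d /\ associated d l.
Proof.
  intros [Hsym [Hnone [δ [Hδ Htri]]]].
  assert (Hln2 := ln_lt_2).
  set (t := ln 2 / (2 * (δ + 1))).
  assert (Ht : 0 < t) by (unfold t; apply Rdiv_lt_0_compat; lra).
  set (rho := fun x y => xpow (exp (- t)) (l x y)).
  assert (Hnn : forall a b, 0 <= rho a b) by (intros; apply xpow_nonneg).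
  assert (Hxx : forall a, rho a a = 0).
  { intros a. unfold rho. assert (l a a = None) by (apply Hnone; auto). rewrite H; reflexivity. }
  assert (Hs : forall a b, rho a b = rho b a) by (intros; unfold rho; now rewrite Hsym).
  set (K := exp (t * δ)).
  assert (HK1 : 1 <= K).
  { unfold K. rewrite <- exp_0. apply my_exp_le. nra. }
  assert (HK2 : K * K <= 2).
  { unfold K. rewrite <- exp_plus. rewrite <- (exp_ln 2) by lra. apply my_exp_le.
    unfold t. apply (Rmult_le_reg_r (2 * (δ + 1))); [lra|].
    field_simplify; [|lra]. nra. }
  assert (Hq : forall a b c, rho a c <= K * Rmax (rho a b) (rho b c)).
  { intros a b c. apply quasi_opt; auto. }
  exists (cdist rho Hnn).
  assert (Hup : forall x y, cdist rho Hnn x y <= rho x y).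
  { intros x y. apply (cdist_le rho Hnn x y nil). }
  assert (Hlo : forall x y, rho x y / 2 <= cdist rho Hnn x y).
  { intros x y. apply cdist_ge. intros l0.
    pose proof (frink_cs rho Hnn K HK1 HK2 Hxx Hq x l0 y). lra. }
  split; [split; [|split; [|split]]|].
  - intros x y. pose proof (Hlo x y); pose proof (Hnn x y); lra.
  - intros x y; split.
    + intros H0. pose proof (Hlo x y). assert (rho x y = 0) by (pose proof (Hnn x y); lra).
      apply Hnone. unfold rho in H1. destruct (l x y) as [r|] eqn:E; auto.
      simpl in H1. unfold Rpower in H1. pose proof (exp_pos (r * ln (exp (-t)))). lra.
    + intros ->. pose proof (Hup y y). pose proof (Hlo y y). rewrite Hxx in *. lra.
  - intros x y. apply Rle_antisym.
    + apply cdist_ge. intros l0. rewrite <- cs_rev by auto. apply cdist_le.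
    + apply cdist_ge. intros l0. rewrite <- cs_rev by auto. apply cdist_le.
  - intros x y z.
    assert (forall l2, cdist rho Hnn x z - cs rho y l2 z <= cdist rho Hnn x y).
    { intros l2. apply cdist_ge. intros l1.
      pose proof (cdist_le rho Hnn x z (l1 ++ y :: l2)). rewrite cs_app in H. lra. }
    assert (cdist rho Hnn x z - cdist rho Hnn x y <= cdist rho Hnn y z).
    { apply cdist_ge. intros l2. specialize (H l2). lra. }
    lra.
  - exists (exp (-t)), 3. split; [split|split].
    + apply exp_pos.
    + rewrite <- exp_0. apply exp_increasing. lra.
    + lra.
    + intros x y. pose proof (Hup x y). pose proof (Hlo x y). pose proof (Hnn x y).
      fold (rho x y). split; lra.
Qed.

Lemma part2 (X : Type) (d : X -> X -> R) : is_metric d ->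
  is_logscale (log_of_metric d) /\ associated d (log_of_metric d).
Proof.
  intros [Hnn [Hz [Hs Htr]]].
  assert (Hpos : forall x y, x <> y -> 0 < d x y).
  { intros x y H. destruct (Hnn x y) as [h|h]; auto. exfalso; apply H, Hz; auto. }
  assert (He1 : 2 < exp 1) by (pose proof (exp_ineq1 1); lra).
  assert (Hl2 : ln 2 < 1).
  { rewrite <- (ln_exp 1). apply ln_increasing; lra. }
  split; [split; [|split]|].
  - intros x y. unfold log_of_metric.
    destruct (excluded_middle_informative (x = y)), (excluded_middle_informative (y = x));
      subst; auto; try congruence; now rewrite Hs.
  - intros x y. unfold log_of_metric.
    destruct (excluded_middle_informative (x = y)); split; auto; intros; [discriminate|contradiction].
  - exists 2. split; [lra|]. intros x y z. unfold log_of_metric.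
    destruct (excluded_middle_informative (x = z)) as [exz|nxz]; [simpl; destruct (excluded_middle_informative (x = y)), (excluded_middle_informative (y = z)); simpl; auto|].
    destruct (excluded_middle_informative (x = y)) as [exy|nxy].
    + subst y. destruct (excluded_middle_informative (x = z)); [contradiction|]. simpl; lra.
    + destruct (excluded_middle_informative (y = z)) as [eyz|nyz].
      * subst z. simpl; lra.
      * simpl.
        pose proof (base_Int_part (ln (d x y))) as [A1 A2].
        pose proof (base_Int_part (ln (d y z))) as [B1 B2].
        pose proof (base_Int_part (ln (d x z))) as [C1 C2].
        pose proof (Hpos _ _ nxy). pose proof (Hpos _ _ nyz). pose proof (Hpos _ _ nxz).
        pose proof (Htr x y z).
        destruct (Rle_dec (d y z) (d x y)) as [h|h].
        -- assert (ln (d x z) <= ln 2 + ln (d x y)).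
           { rewrite <- ln_mult by lra. apply my_ln_le; lra. }
           pose proof (Rmin_l (- IZR (Int_part (ln (d x y)))) (- IZR (Int_part (ln (d y z))))).
           lra.
        -- assert (ln (d x z) <= ln 2 + ln (d y z)).
           { rewrite <- ln_mult by lra. apply my_ln_le; lra. }
           pose proof (Rmin_r (- IZR (Int_part (ln (d x y)))) (- IZR (Int_part (ln (d y z))))).
           lra.
  - exists (exp (-1)), (exp 1). split; [split|split].
    + apply exp_pos.
    + rewrite <- exp_0. apply exp_increasing. lra.
    + lra.
    + intros x y. unfold log_of_metric.
      destruct (excluded_middle_informative (x = y)) as [e|n].
      * subst. simpl. assert (d y y = 0) by (apply Hz; auto). rewrite H. lra.
      * replace (-1) with (- (1)) by ring. rewrite xpow_exp.
        pose proof (base_Int_part (ln (d x y))) as [A1 A2].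
        pose proof (Hpos _ _ n).
        set (F := IZR (Int_part (ln (d x y)))) in *.
        replace (- (1 * - F)) with F by ring.
        assert (exp F <= d x y).
        { rewrite <- (exp_ln (d x y)) by lra. apply my_exp_le; lra. }
        assert (d x y <= exp 1 * exp F).
        { rewrite <- exp_plus. rewrite <- (exp_ln (d x y)) at 1 by lra. apply my_exp_le; lra. }
        pose proof (exp_pos F). pose proof (exp_pos 1).
        split; auto.
        apply (Rmult_le_reg_l (exp 1)); [lra|]. rewrite <- Rmult_assoc, Rinv_r by lra. nra.
Qed.

Theorem proposition1p1p3 (X : Type) :
  (forall l : X -> X -> xR, is_logscale l ->
     exists d : X -> X -> R, is_metric d /\ associated d l) /\
  (forall d : X -> X -> R, is_metric d ->
     is_logscale (log_of_metric d) /\ associated d (log_of_metric d)).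
Proof.
  split; [apply part1 | apply part2].
Qed.
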